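(* For $n\ge 1$, let $\mathcal M(n)$ be the number of MAB pairs and $\overline{\mathcal M}(n)$ the number of MAU pairs $(u,v)$ with $u,v\in\{a,b\}^n$. Then the number of pairs $(u,v)\in\{a,b\}^n\times\{a,b\}^n$ that have an external abelian-border but no internal abelian-border equals $\dfrac{2^{2n}-\mathcal M(n)-\overline{\mathcal M}(n)}{2}$, and so does the number of pairs that have an internal abelian-border but no external abelian-border.
   Context: Let $\Sigma=\{a,b\}$. For a word $w$ and a letter $c$, $|w|_c$ denotes the number of occurrences of $c$ in $w$. Two words $x,y$ are abelian equivalent, written $x\sim_{\mathrm{abl}}y$, if $|x|_c=|y|_c$ for all $c\in\Sigma$. For words $u,v$: a pair $(x,y)$ is an internal abelian-border of $(u,v)$ if $x$ is a nonempty proper suffix of $u$, $y$ is a proper prefix of $v$, and $x\sim_{\mathrm{abl}}y$; it is an external abelian-border of $(u,v)$ if $x$ is a nonempty proper prefix of $u$, $y$ is a proper suffix of $v$, and $x\sim_{\mathrm{abl}}y$. The pair $(u,v)$ is mutually abelian-bordered (MAB) if it has both an internal and an external abelian-border, and mutually abelian-unbordered (MAU) if it has neither. *)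

(* Defs.v *)
(* Alphabet Sigma = {a,b} is encoded as bool (a := true, b := false). *)
From mathcomp Require Import all_boot.
Set Implicit Arguments.
Unset Strict Implicit.
Unset Printing Implicit Defensive.

Definition word := seq bool.

Definition abl (x y : word) : bool := [forall c : bool, count_mem c x == count_mem c y].

Definition internal_border (u v x y : word) : bool :=
  [&& suffix x u, x != [::], x != u, prefix y v, y != v & abl x y].

Definition external_border (u v x y : word) : bool :=
  [&& prefix x u, x != [::], x != u, suffix y v, y != v & abl x y].

(* Existence of a border: every prefix of u is take i u and every suffix is
   drop (size u - i) u for some i <= size u, so quantifying over these
   finitely many candidates is the same as quantifying over all words. *)
Definition has_internal (u v : word) : bool :=
  [exists i : 'I_(size u).+1, exists j : 'I_(size v).+1,
     internal_border u v (drop (size u - i) u) (take j v)].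

Definition has_external (u v : word) : bool :=
  [exists i : 'I_(size u).+1, exists j : 'I_(size v).+1,
     external_border u v (take i u) (drop (size v - j) v)].

Definition MAB (u v : word) : bool := has_internal u v && has_external u v.
Definition MAU (u v : word) : bool := ~~ has_internal u v && ~~ has_external u v.

Definition pairs (n : nat) := (n.-tuple bool * n.-tuple bool)%type.

Definition M (n : nat) : nat := #|[set p : pairs n | MAB p.1 p.2]|.
Definition Mbar (n : nat) : nat := #|[set p : pairs n | MAU p.1 p.2]|.

Definition ext_only (n : nat) : nat :=
  #|[set p : pairs n | has_external p.1 p.2 && ~~ has_internal p.1 p.2]|.
Definition int_only (n : nat) : nat :=
  #|[set p : pairs n | has_internal p.1 p.2 && ~~ has_external p.1 p.2]|.

(* Main.v *)
Require Import Defs.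
From mathcomp Require Import all_boot zify.

Lemma size_cnt (x : word) : size x = count_mem true x + count_mem false x.
Proof. elim: x => //= [[]] s IH /=; rewrite IH; lia. Qed.

Lemma abl_size x y : abl x y -> size x = size y.
Proof.
move/forallP=> H; rewrite !size_cnt.
by rewrite (eqP (H true)) (eqP (H false)).
Qed.

Lemma abl_sym x y : abl x y = abl y x.
Proof. by apply/forallP/forallP => H c; rewrite eq_sym; apply: H. Qed.

Lemma int_ext u v x y : internal_border u v x y = external_border v u y x.
Proof.
rewrite /internal_border /external_border abl_sym.
case Ha: (abl y x); last by rewrite !andbF.
have Hs := abl_size _ _ Ha.
have -> : (x != [::]) = (y != [::]).
  by rewrite -!size_eq0 Hs.
by case: (suffix x u); case: (x != u); case: (prefix y v); case: (y != v);
   case: (y != [::]).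
Qed.

Lemma hi_he u v : has_internal u v = has_external v u.
Proof.
apply/existsP/existsP => [[i /existsP [j H]] | [j /existsP [i H]]].
  by exists j; apply/existsP; exists i; rewrite -int_ext.
by exists i; apply/existsP; exists j; rewrite int_ext.
Qed.

Theorem mainTheorem13 (n : nat) (hn : 1 <= n) :
  2 * ext_only n = 2 ^ (2 * n) - M n - Mbar n /\
  2 * int_only n = 2 ^ (2 * n) - M n - Mbar n.
Proof.
have Heq : int_only n = ext_only n.
  rewrite /int_only /ext_only.
  have -> : [set p : pairs n | has_internal p.1 p.2 && ~~ has_external p.1 p.2]
    = [set (q.2, q.1) | q in [set p : pairs n | has_external p.1 p.2 && ~~ has_internal p.1 p.2]].
    apply/setP => -[a b]; rewrite inE /=.
    apply/idP/imsetP => [H | [[c d]]].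
      by exists (b, a); rewrite // inE /= (hi_he b a) -(hi_he a b).
    by rewrite inE /= => H [-> ->]; move: H; rewrite (hi_he c d) -(hi_he d c).
  by rewrite card_imset // => -[a b] [c d] [-> ->].
set hi := fun p : pairs n => has_internal p.1 p.2.
set he := fun p : pairs n => has_external p.1 p.2.
have T : #|[predI hi & he]| + #|[predD hi & he]| + #|[predI [predC hi] & he]|
          + #|[predD [predC hi] & he]| = 2 ^ (2 * n).
  rewrite cardID -addnA cardID cardC card_prod !card_tuple card_bool.
  by rewrite -expnD addnn mul2n.
have E1 : M n = #|[predI hi & he]| by apply: eq_card => p; rewrite inE.
have E2 : Mbar n = #|[predD [predC hi] & he]| by apply: eq_card => p; rewrite inE /= /MAU andbC.
have E3 : ext_only n = #|[predI [predC hi] & he]|.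
  by apply: eq_card => p; rewrite inE /= andbC.
have E4 : int_only n = #|[predD hi & he]| by apply: eq_card => p; rewrite !inE andbC.
rewrite -Heq in E3.
split; lia.
Qed.
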